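(* Let $p>5$ be a prime such that $-1$ is a quadratic residue modulo $p$ and $2$ and $3$ are quadratic non-residues modulo $p$. Then the path system $\mathcal{P}_p$ on the Paley graph $G_p$ is not metrizable.
   Context: Let $R$ and $N$ denote the sets of nonzero quadratic residues and quadratic non-residues in $\mathbb{F}_p$. The Paley graph $G_p$ has vertex set $\mathbb{F}_p$, with $a,b$ adjacent iff $a-b\in R$. A path system $\mathcal{P}$ in a graph $G=(V,E)$ is a collection of simple paths such that for every pair of distinct vertices $u,v$ there is exactly one path $P_{u,v}\in\mathcal{P}$ connecting them. $\mathcal{P}$ is metrizable if there exists $w:E\to(0,\infty)$ such that for all $u,v$, $w(P_{u,v})\le w(Q)$ for every $u$–$v$ path $Q$ in $G$ (where $w$ of a path is the sum of its edge weights). The path system $\mathcal{P}_p$ is defined for $a\neq b\in\mathbb{F}_p$ by: if $b-a\in R$, then $P_{a,b}=(a,b)$; if $b-a=3$, then $P_{a,b}=(a,a+1,a+2,b)$ (and $P_{b,a}$ is the same path); if $b-a\in N$ and $b-a\neq\pm3$, then $P_{a,b}=(a,\tfrac{a+b}{2},b)$. *)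

(* Defs.v *)
From HB Require Import structures.
From mathcomp Require Import all_boot all_order all_algebra.
From mathcomp Require Import Rstruct.
From Stdlib Require Import Reals.
Set Implicit Arguments. Unset Strict Implicit. Unset Printing Implicit Defensive.
Import Order.TTheory GRing.Theory Num.Theory.
Local Open Scope ring_scope.

Definition qr (p : nat) (x : 'F_p) : bool := (x != 0) && [exists y : 'F_p, y * y == x].

Definition paley_adj (p : nat) : rel 'F_p := fun a b => qr (a - b).

Definition is_path (V : eqType) (G : rel V) (u v : V) (s : seq V) : Prop :=
  exists t, [/\ s = u :: t, path G u t, last u t = v & uniq s].

Definition path_weight (V : Type) (w : V -> V -> R) (s : seq V) : R :=
  \sum_(e <- zip s (behead s)) w e.1 e.2.

Definition edge_weight (V : eqType) (G : rel V) (w : V -> V -> R) : Prop :=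
  forall a b, G a b -> (0 < w a b)%R /\ w a b = w b a.

Definition metrizable (V : eqType) (G : rel V) (P : V -> V -> seq V) : Prop :=
  exists w : V -> V -> R, edge_weight G w /\
    forall u v, u != v -> forall Q, is_path G u v Q ->
      (path_weight w (P u v) <= path_weight w Q)%R.

Definition Pp (p : nat) (a b : 'F_p) : seq 'F_p :=
  if qr (b - a) then [:: a; b]
  else if b - a == 3%:R then [:: a; a + 1; a + 2%:R; b]
  else if a - b == 3%:R then [:: a; a - 1; a - 2%:R; b]   (* reverse of P_{b,a} *)
  else [:: a; (a + b) / 2%:R; b].

(* Main.v *)
Require Import Defs.
From Stdlib Require Import Reals.
From mathcomp Require Import all_boot all_order all_algebra all_solvable all_field.
From mathcomp Require Import zify ring lra.
From mathcomp Require Import Rstruct.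
Import Order.TTheory GRing.Theory Num.Theory.
Set Implicit Arguments. Unset Strict Implicit. Unset Printing Implicit Defensive.
Local Open Scope ring_scope.

Lemma Fp_fermat (p : nat) (x : 'F_p) : prime p -> x != 0 -> x ^+ p.-1 = 1.
Proof.
move=> pp nx.
have h : x ^+ #|'F_p| = x := expf_card x.
rewrite card_Fp // in h.
have p0 : (0 < p)%N := prime_gt0 pp.
have h2 : x ^+ (p.-1).+1 = x by rewrite prednK.
move: h2; rewrite exprSr => h2.
apply: (mulIf nx). by rewrite h2 mul1r.
Qed.

Arguments Fp_fermat {p x}.

Lemma Fp_prim (p : nat) : prime p -> exists g : 'F_p, (p.-1).-primitive_root g.
Proof.
move=> pp.
pose rs := [seq x <- enum 'F_p | x != 0].
have p1 : (0 < p.-1)%N by have := prime_gt1 pp; lia.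
have H : has (p.-1).-primitive_root rs.
  apply: has_prim_root => //.
  - apply/allP => x; rewrite mem_filter => /andP[nx _].
    by apply/unity_rootP; apply: Fp_fermat.
  - by rewrite filter_uniq // enum_uniq.
  - rewrite size_filter.
    have := cardC1 (0 : 'F_p). rewrite card_Fp // => <-.
    by rewrite cardE enumT /enum_mem size_filter.
by case/hasP: H => g _ Hg; exists g.
Qed.

Arguments Fp_prim {p}.

Lemma qr_mul (p : nat) (a b : 'F_p) : qr a -> qr b -> qr (a * b).
Proof.
case/andP=> a0 /existsP[s /eqP hs]; case/andP=> b0 /existsP[t /eqP ht].
apply/andP; split; first by rewrite mulf_neq0.
by apply/existsP; exists (s * t); rewrite -hs -ht; apply/eqP; ring.
Qed.

Lemma qr_sq (p : nat) (a : 'F_p) : a != 0 -> qr (a * a).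
Proof. move=> a0; apply/andP; split; first by rewrite mulf_neq0. by apply/existsP; exists a. Qed.

Lemma qr_neq0 (p : nat) (a : 'F_p) : qr a -> a != 0.
Proof. by case/andP. Qed.

Lemma nqr_mul (p : nat) (a b : 'F_p) : qr a -> ~~ qr b -> b != 0 -> ~~ qr (a * b).
Proof.
move=> /andP[a0 /existsP[s /eqP hs]] nb b0; apply/negP => /andP[_ /existsP[t /eqP ht]].
have s0 : s != 0 by apply: contraNneq a0 => s0; rewrite -hs s0 mul0r.
move/negP: nb; apply; apply/andP; split => //; apply/existsP; exists (t / s).
apply/eqP; rewrite -(mulKf a0 b) -ht -hs.
by field.
Qed.

Lemma qr_nn (p : nat) (a b : 'F_p) : prime p -> a != 0 -> b != 0 -> ~~ qr a -> ~~ qr b -> qr (a * b).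
Proof.
move=> pp a0 b0 na nb.
have [g pg] := Fp_prim pp.
have [[i hi] ea] := prim_rootP pg (Fp_fermat pp a0).
have [[j hj] eb] := prim_rootP pg (Fp_fermat pp b0).
rewrite /= in ea eb; rewrite ea eb in a0 b0 na nb *.
move: a0 b0 na nb.
have sqE k : ~~ odd k -> g ^+ k = g ^+ k./2 * g ^+ k./2.
  by move=> ok; rewrite -exprD addnn even_halfK.
have g0 : g != 0.
  apply/eqP => g0; have := prim_expr_order pg; rewrite g0 expr0n.
  have -> : (p.-1 == 0)%N = false by have := prime_gt1 pp; lia.
  by move/eqP; rewrite eq_sym oner_eq0.
have qrk k : ~~ odd k -> qr (g ^+ k).
  by move=> ok; rewrite sqE //; apply: qr_sq; rewrite expf_neq0.
move=> a0 b0 na nb.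
have oi : odd i.
  by apply: contraNT na; apply: qrk.
have oj : odd j by apply: contraNT nb; apply: qrk.
by rewrite -exprD; apply: qrk; rewrite oddD oi oj.
Qed.

Lemma natz (p k : nat) : prime p -> (0 < k < p)%N -> (k%:R : 'F_p) != 0.
Proof.
move=> pp /andP[k0 kp]; apply/eqP => /(congr1 (@nat_of_ord _)).
by rewrite val_Fp_nat // modn_small //= => e; rewrite e in k0.
Qed.

Arguments natz {p} k.

Lemma p_mod4 (p : nat) : prime p -> (2 < p)%N -> qr (-1 : 'F_p) -> (p %% 4 = 1)%N.
Proof.
move=> pp p2 /andP[_ /existsP[t /eqP ht]].
have t0 : t != 0 by apply: contra_eq_neq ht => ->; rewrite mul0r eq_sym oppr_eq0 oner_eq0.
have hf := Fp_fermat pp t0.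
have podd : odd p by case: (even_prime pp) p2 => [->|].
have /orP[] : (p %% 4 == 1)%N || (p %% 4 == 3)%N.
  have := ltn_pmod p (isT : 0 < 4)%N; move: podd; rewrite [in odd p](divn_eq p 4).
  rewrite oddD oddM /= andbF /=; case: (p %% 4)%N => [|[|[|[|]]]] //.
- by move/eqP.
move=> /eqP h4; exfalso.
have e : p.-1 = (2 * (p %/ 4).*2.+1)%N.
  have := divn_eq p 4; rewrite h4 => ep. lia.
move: hf; rewrite e exprM expr2 ht -signr_odd /= odd_double /= expr1.
move=> h.
have : (2%:R : 'F_p) = 0 by rewrite mulr2n -{1}h addNr.
by apply/eqP; apply: (natz 2) => //; lia.
Qed.

Arguments p_mod4 {p}.

Lemma small_primes : forall n, (n < 29)%N -> (5 < n)%N -> prime n -> (n %% 4 = 1)%N -> (n == 13) || (n == 17).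
Proof. do 29! case=> //. Qed.

Lemma p_ge29 (p : nat) : prime p -> (5 < p)%N -> qr (-1 : 'F_p) ->
  ~~ qr (2%:R : 'F_p) -> ~~ qr (3%:R : 'F_p) -> (29 <= p)%N.
Proof.
move=> pp p5 q1 n2 n3.
have h4 := p_mod4 pp (ltn_trans (isT : 2 < 5)%N p5) q1.
have [//|lt] := leqP 29 p.
case/orP: (small_primes lt p5 pp h4) => /eqP ep; subst p.
- exfalso; move/negP: n3; apply; apply/andP; split => //; apply/existsP; exists 4%:R; by [].
- exfalso; move/negP: n2; apply; apply/andP; split => //; apply/existsP; exists 6%:R; by [].
Qed.

Lemma sum_shift (p : nat) (F : 'F_p -> R) (c : 'F_p) : \sum_a F (a + c) = \sum_a F a.
Proof. by rewrite [RHS](reindex_inj (addIr c)). Qed.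

Definition fav (p : nat) (w : 'F_p -> 'F_p -> R) (x : 'F_p) : R := \sum_a w a (a + x).

Lemma sum_shift2 (p : nat) (w : 'F_p -> 'F_p -> R) (c d : 'F_p) :
  \sum_a w (a + c) (a + d) = fav w (d - c).
Proof.
rewrite /fav -(sum_shift (fun a => w a (a + (d - c))) c).
by apply: eq_bigr => a _; congr (w _ _); rewrite -addrA [c + _]addrC subrK.
Qed.

Lemma pw2 (T : Type) (w : T -> T -> R) a b : path_weight w [:: a; b] = w a b.
Proof. by rewrite /path_weight /= big_cons big_nil addr0. Qed.
Lemma pw3 (T : Type) (w : T -> T -> R) a b c : path_weight w [:: a; b; c] = w a b + w b c.
Proof. by rewrite /path_weight /= !big_cons big_nil addr0. Qed.
Lemma pw4 (T : Type) (w : T -> T -> R) a b c d : path_weight w [:: a; b; c; d] = w a b + w b c + w c d.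
Proof. by rewrite /path_weight /= !big_cons big_nil addr0 addrA. Qed.

Definition MetC (p : nat) (w : 'F_p -> 'F_p -> R) := forall u v : 'F_p, u != v ->
  forall Q, is_path (@paley_adj p) u v Q -> Rle (path_weight w (Pp u v)) (path_weight w Q).

Lemma addKE (p : nat) (a x : 'F_p) : a + x - a = x.
Proof. by rewrite addrAC subrr add0r. Qed.
Lemma addKE2 (p : nat) (a x : 'F_p) : a - (a + x) = - x.
Proof. by rewrite opprD addrA subrr add0r. Qed.
Lemma addKE3 (p : nat) (a x y : 'F_p) : a + x - (a + y) = x - y.
Proof. by rewrite opprD addrACA subrr add0r. Qed.

Lemma fav_sym (p : nat) (w : 'F_p -> 'F_p -> R) (x : 'F_p) :
  edge_weight (@paley_adj p) w -> qr x -> fav w (- x) = fav w x.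
Proof.
move=> ew qx.
rewrite -sub0r -sum_shift2 /fav; apply: eq_bigr => a _.
have h : paley_adj (a + x) a by rewrite /paley_adj addKE.
by rewrite addr0; have [_ ->] := ew _ _ h.
Qed.

Lemma adjE (p : nat) (a x : 'F_p) : paley_adj a (a + x) = qr (- x).
Proof. by rewrite /paley_adj addKE2. Qed.

Lemma fav_pos (p : nat) (w : 'F_p -> 'F_p -> R) :
  edge_weight (@paley_adj p) w -> qr (-1 : 'F_p) -> 0 < fav w 1.
Proof.
move=> ew q1.
have wp a : 0 < w a (a + 1).
  have h : paley_adj a (a + 1) by rewrite adjE.
  by have [/RltP h1 _] := ew _ _ h.
rewrite /fav (bigD1 0) //=.
apply: (lt_le_trans (wp 0)); rewrite lerDl.
by apply: sumr_ge0 => a _; apply: ltW.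
Qed.

Lemma qr_neg (p : nat) (x : 'F_p) : qr (-1 : 'F_p) -> qr x -> qr (- x).
Proof. by move=> q1 qx; rewrite -mulN1r; apply: qr_mul. Qed.

Lemma fav_conv (p : nat) (w : 'F_p -> 'F_p -> R) (y z1 z2 : 'F_p) :
  edge_weight (@paley_adj p) w -> MetC w -> (2%:R : 'F_p) != 0 -> qr (-1 : 'F_p) ->
  y != 0 -> qr z1 -> qr z2 -> ~~ qr (y + y) -> y + y != 3%:R -> - (y + y) != 3%:R ->
  z1 + z2 = y + y ->
  fav w y + fav w y <= fav w z1 + fav w z2.
Proof.
move=> ew mc n2 q1 y0 qz1 qz2 nq h3 hn3 ez.
have yy0 : y + y != 0 by rewrite -mulr2n -mulr_natr mulf_neq0.
have z10 := qr_neq0 qz1; have z20 := qr_neq0 qz2.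
have key a : w a (a + y) + w (a + y) (a + (y + y)) <= w a (a + z1) + w (a + z1) (a + (y + y)).
  have ne : a != a + (y + y) by rewrite -subr_eq0 addKE2 oppr_eq0.
  have ip : is_path (@paley_adj p) a (a + (y + y)) [:: a; a + z1; a + (y + y)].
    exists [:: a + z1; a + (y + y)]; split => //=.
    - rewrite adjE qr_neg // andbT /paley_adj addKE3.
      have -> : z1 - (y + y) = - z2 by rewrite -ez opprD addrA subrr add0r.
      exact: qr_neg.
    - rewrite !inE negb_or ne andbT; apply/andP; split.
      by rewrite eq_sym -subr_eq0 addKE.
      by rewrite andbT -subr_eq0 addKE3 -ez opprD addrA subrr add0r oppr_eq0.
  have := mc _ _ ne _ ip; move/RleP.
  rewrite /Pp addKE (negbTE nq) (negbTE h3) addKE2 (negbTE hn3) !pw3.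
  have -> : (a + (a + (y + y))) / 2%:R = a + y.
    by apply: (mulIf n2); rewrite divfK // mulr_natr mulr2n [RHS]addrACA [LHS]addrA.
  by [].
have e1 : fav w y + fav w y = \sum_a (w a (a + y) + w (a + y) (a + (y + y))).
  by rewrite big_split /= sum_shift2 addrK.
have e2 : fav w z1 + fav w z2 = \sum_a (w a (a + z1) + w (a + z1) (a + (y + y))).
  by rewrite big_split /= sum_shift2 -ez [z1 + z2]addrC addrK.
by rewrite e1 e2; apply: ler_sum => a _; exact: key.
Qed.

Lemma qr1 (p : nat) : qr (1 : 'F_p).
Proof. by have := @qr_sq p 1 (oner_neq0 _); rewrite mulr1. Qed.

Lemma natB (p m n : nat) : (n <= m)%N -> (m%:R - n%:R : 'F_p) = (m - n)%:R.
Proof. by move=> h; rewrite natrB. Qed.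

Lemma fav_p3 (p : nat) (w : 'F_p -> 'F_p -> R) :
  edge_weight (@paley_adj p) w -> MetC w -> qr (-1 : 'F_p) -> ~~ qr (3%:R : 'F_p) ->
  (3%:R : 'F_p) != 0 -> (4%:R : 'F_p) != 0 ->
  fav w 1 + fav w 1 + fav w 1 <= fav w 4%:R + fav w (-1).
Proof.
move=> ew mc q1 n3 h30 h40.
have q4 : qr (4%:R : 'F_p).
  have h2 : (2%:R : 'F_p) != 0.
    by apply: contra h40 => /eqP h; rewrite (_ : 4 = 2 * 2)%N // natrM h mul0r.
  by rewrite (_ : 4 = 2 * 2)%N // natrM; apply: qr_sq.
have key a : w a (a + 1) + w (a + 1) (a + 2%:R) + w (a + 2%:R) (a + 3%:R) <=
             w a (a + 4%:R) + w (a + 4%:R) (a + 3%:R).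
  have ne : a != a + 3%:R by rewrite -subr_eq0 addKE2 oppr_eq0.
  have ip : is_path (@paley_adj p) a (a + 3%:R) [:: a; a + 4%:R; a + 3%:R].
    exists [:: a + 4%:R; a + 3%:R]; split => //=.
    - rewrite adjE qr_neg // andbT /paley_adj addKE3 natB //.
      exact: qr1.
    - rewrite !inE negb_or ne andbT; apply/andP; split.
        by rewrite eq_sym -subr_eq0 addKE.
      by rewrite andbT -subr_eq0 addKE3 natB // oner_eq0.
  have := mc _ _ ne _ ip; move/RleP.
  by rewrite /Pp addKE (negbTE n3) eqxx pw3 pw4.
have e1 : fav w 1 + fav w 1 + fav w 1 =
   \sum_a (w a (a + 1) + w (a + 1) (a + 2%:R) + w (a + 2%:R) (a + 3%:R)).
  by rewrite !big_split /= !sum_shift2 natB // [2%:R]mulr2n addrK.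
have e2 : fav w 4%:R + fav w (-1) = \sum_a (w a (a + 4%:R) + w (a + 4%:R) (a + 3%:R)).
  by rewrite big_split /= sum_shift2 -opprB natB.
by rewrite e1 e2; apply: ler_sum => a _; exact: key.
Qed.

Definition el (p : nat) (b : bool) (i j : nat) : 'F_p := (-1) ^+ b * 4%:R ^+ i * 6%:R ^+ j.
Definition Hs (p : nat) (x : 'F_p) := exists b i j, x = el p b i j.
Definition Ok (p : nat) (x : 'F_p) := (x + x != 3%:R) && (- (x + x) != 3%:R).

Lemma fin_max (T : finType) (P : pred T) (F : T -> R) (t0 : T) :
  P t0 -> exists t, P t /\ forall u, P u -> F u <= F t.
Proof. by move=> Pt0; case: (arg_maxP F Pt0) => t Pt Ht; exists t. Qed.

Lemma qr_exp (p : nat) (a : 'F_p) n : qr a -> qr (a ^+ n).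
Proof. by move=> qa; elim: n => [|n IH]; [exact: qr1 | rewrite exprS; apply: qr_mul]. Qed.

Lemma Hs_neg (p : nat) (x : 'F_p) : Hs x -> Hs (- x).
Proof.
case=> b [i [j ->]]; exists (~~ b), i, j; rewrite /el -!mulNr.
by congr (_ * _ * _); case: b => /=; rewrite ?expr0 ?expr1 ?opprK.
Qed.

Lemma Hs_4 (p : nat) (x : 'F_p) : Hs x -> Hs (4%:R * x).
Proof.
case=> b [i [j ->]]; exists b, i.+1, j; rewrite /el exprS.
by rewrite !mulrA [4%:R * _]mulrC.
Qed.

Lemma Hs_6 (p : nat) (x : 'F_p) : Hs x -> Hs (6%:R * x).
Proof.
case=> b [i [j ->]]; exists b, i, j.+1; rewrite /el exprS.
by rewrite mulrCA.
Qed.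

Lemma nz (p k : nat) : prime p -> (29 <= p)%N -> (0 < k < 29)%N -> (k%:R : 'F_p) != 0.
Proof. move=> pp p29 hk; apply: natz => //; lia. Qed.
Arguments nz {p} k.

Lemma expr_modp (p : nat) (a : 'F_p) n : prime p -> a != 0 -> a ^+ n = a ^+ (n %% p.-1).
Proof.
move=> pp a0; rewrite {1}(divn_eq n p.-1) exprD mulnC exprM Fp_fermat //.
by rewrite expr1n mul1r.
Qed.

Lemma Hs_red (p : nat) (x : 'F_p) : prime p -> (29 <= p)%N -> Hs x ->
  exists t : bool * 'I_p * 'I_p, x = el p t.1.1 t.1.2 t.2.
Proof.
move=> pp p29 [b [i [j ->]]].
have lt k : (k %% p.-1 < p)%N.
  have : (k %% p.-1 < p.-1)%N by rewrite ltn_mod; lia.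
  lia.
exists (b, Ordinal (lt i), Ordinal (lt j)); rewrite /el /=.
by rewrite [4%:R ^+ i](expr_modp _ pp) ?(nz 4) // [6%:R ^+ j](expr_modp _ pp) ?(nz 6).
Qed.

Lemma Hs_qr (p : nat) (x : 'F_p) : prime p -> (29 <= p)%N -> qr (-1 : 'F_p) ->
  qr (6%:R : 'F_p) -> Hs x -> qr x.
Proof.
move=> pp p29 q1 q6 [b [i [j ->]]]; rewrite /el.
have q4 : qr (4%:R : 'F_p) by rewrite (_ : 4 = 2 * 2)%N // natrM; apply: qr_sq; exact: (nz 2).
by apply: qr_mul; [apply: qr_mul|]; apply: qr_exp.
Qed.

Lemma neq_k (p : nat) (u v c : 'F_p) (k : nat) : (k%:R : 'F_p) != 0 -> c * (u - v) = k%:R -> u != v.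
Proof. by move=> hk e; apply: contra hk => /eqP h; rewrite -e h subrr mulr0. Qed.

Lemma inv_pow (p : nat) (a : 'F_p) : prime p -> a != 0 -> a ^+ p.-2 = a^-1.
Proof.
move=> pp a0; apply: (mulfI a0); rewrite mulfV // -exprS.
have -> : (p.-2.+1 = p.-1)%N by have := prime_gt1 pp; lia.
exact: Fp_fermat.
Qed.

Lemma Ok_neg (p : nat) (x : 'F_p) : Ok x -> Ok (- x).
Proof. by rewrite /Ok -opprD opprK andbC. Qed.

Lemma pw_id (p : nat) (a : 'F_p) i : prime p -> a != 0 -> a ^+ i * a ^+ (i * p.-2) = 1.
Proof.
move=> pp a0; rewrite -exprD.
have -> : (i + i * p.-2 = i * p.-1)%N.
  have e : (p.-1 = p.-2.+1)%N.
    have := prime_gt1 pp; move: (p) => q; by case: q => [|[|n]].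
  by rewrite e mulnS.
by rewrite exprM Fp_fermat // expf_neq0.
Qed.

Lemma core (p : nat) (f : 'F_p -> R) :
  prime p -> (29 <= p)%N -> qr (-1 : 'F_p) -> ~~ qr (2%:R : 'F_p) -> qr (6%:R : 'F_p) ->
  (forall x, qr x -> f (- x) = f x) ->
  (forall y z1 z2, y != 0 -> qr z1 -> qr z2 -> ~~ qr (y + y) -> y + y != 3%:R ->
     - (y + y) != 3%:R -> z1 + z2 = y + y -> f y + f y <= f z1 + f z2) ->
  f 1 + f 1 + f 1 <= f 4%:R + f (-1) -> 0 < f 1 -> False.
Proof.
move=> pp p29 q1 n2 q6 fs fc f3 f1.
have HR x : Hs x -> qr x := Hs_qr pp p29 q1 q6.
have n2' : (2%:R : 'F_p) != 0 := nz 2 pp p29 isT.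
have n3 : (3%:R : 'F_p) != 0 := nz 3 pp p29 isT.
have n4 : (4%:R : 'F_p) != 0 := nz 4 pp p29 isT.
have n6 : (6%:R : 'F_p) != 0 := nz 6 pp p29 isT.
pose c14 : 'F_p := - (4%:R)^-1.
pose c16 : 'F_p := - (6%:R)^-1.
pose c23 : 'F_p := 2%:R / 3%:R.
have H1 : Hs (1 : 'F_p) by exists false, 0%N, 0%N; rewrite /el !expr0 !mulr1.
have H4 : Hs (4%:R : 'F_p) by exists false, 1%N, 0%N; rewrite /el expr0 expr1 mul1r mulr1.
have H14 : Hs c14 by exists true, p.-2, 0%N; rewrite /el expr1 expr0 mulr1 inv_pow // mulN1r.
have H16 : Hs c16 by exists true, 0%N, p.-2; rewrite /el expr1 expr0 mulr1 inv_pow // mulN1r.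
have H23 : Hs c23.
  exists false, 1%N, p.-2; rewrite /el expr0 expr1 mul1r inv_pow // /c23.
  by field; rewrite n3 n6.
have Hm1 : Hs (-1 : 'F_p) by apply: Hs_neg.
have okk (x : 'F_p) c1 k1 c2 k2 : (0 < k1 < 29)%N -> (0 < k2 < 29)%N ->
    c1 * (x + x - 3%:R) = k1%:R -> c2 * (- (x + x) - 3%:R) = k2%:R -> Ok x.
  move=> hk1 hk2 e1 e2; apply/andP; split.
    exact: (neq_k (nz k1 pp p29 hk1) e1).
  exact: (neq_k (nz k2 pp p29 hk2) e2).
have O1 : Ok (1 : 'F_p) by apply: (okk _ (-1) 1%N (-1) 5%N) => //; ring.
have Om1 : Ok (-1 : 'F_p) by apply: Ok_neg.
have O4 : Ok (4%:R : 'F_p) by apply: (okk _ 1 5%N (-1) 11%N) => //; ring.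
have O14 : Ok c14 by apply: (okk _ (- 2%:R) 7%N (- 2%:R) 5%N) => //; rewrite /c14; field.
have O16 : Ok c16 by apply: (okk _ (- 3%:R) 10%N (- 3%:R) 8%N) => //; rewrite /c16; field.
have O23 : Ok c23 by apply: (okk _ (- 3%:R) 5%N (- 3%:R) 13%N) => //; rewrite /c23; field.
pose e4 := fun t : bool * 'I_p * 'I_p => el p t.1.1 t.1.2 t.2.
have p1 : (1 < p)%N := prime_gt1 pp.
have p0 : (0 < p)%N := prime_gt0 pp.
have Dst : Ok (e4 (false, Ordinal p1, Ordinal p0)).
  by rewrite /e4 /el /= expr0 expr1 mul1r mulr1.
have [t0 [Dt0 Ht0]] := @fin_max _ (fun t => Ok (e4 t)) (fun t => f (e4 t)) _ Dst.
set M := f (e4 t0).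
have Mb x : Hs x -> Ok x -> f x <= M.
  move=> hx ox; have [t et] := Hs_red pp p29 hx.
  by rewrite et; apply: Ht0; rewrite /e4 -et.
pose Mx (x : 'F_p) := [/\ Hs x, Ok x & f x = M].
have yy2 (y : 'F_p) : y + y = y * 2%:R by rewrite mulr_natr mulr2n.
have cm y z1 z2 : Mx y -> Hs z1 -> Ok z1 -> Hs z2 -> Ok z2 -> z1 + z2 = y + y -> Mx z1 /\ Mx z2.
  move=> [Hy Oy ey] Hz1 Oz1 Hz2 Oz2 e.
  have qy := HR _ Hy.
  have nq : ~~ qr (y + y) by rewrite yy2; apply: nqr_mul.
  case/andP: (Oy) => o1 o2.
  have := fc y z1 z2 (qr_neq0 qy) (HR _ Hz1) (HR _ Hz2) nq o1 o2 e.
  have := Mb _ Hz1 Oz1; have := Mb _ Hz2 Oz2; rewrite ey => b2 b1 hc.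
  split; split => //; lra.
have msym x : Mx x -> Mx (- x).
  by move=> [hx ox ex]; split; [apply: Hs_neg | apply: Ok_neg | rewrite fs // HR].
have n8 : (8%:R : 'F_p) != 0 := nz 8 pp p29 isT.
have M1 s : Mx s -> 4%:R * s = 1 -> Mx 1.
  move=> ms e.
  have es : s = (4%:R)^-1 by apply: (mulfI n4); rewrite mulfV.
  have [m16 _] := cm s c16 c23 ms H16 O16 H23 O23 (ltac:(rewrite es /c16 /c23; field; rewrite n3 n4 n6 //)).
  have [mm1 _] := cm c16 (-1) c23 m16 Hm1 Om1 H23 O23 (ltac:(rewrite /c16 /c23; field; rewrite n3 n6 //)).
  by have := msym _ mm1; rewrite opprK.
have M38 s : Mx s -> 8%:R * s = 3%:R -> Mx 1.
  move=> ms e.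
  have es : s = 3%:R / 8%:R by apply: (mulfI n8); rewrite e mulrCA mulfV // mulr1.
  have [m1 _] := cm s 1 c14 ms H1 O1 H14 O14 (ltac:(rewrite es /c14; field; rewrite n4 n8 //)).
  exact: m1.
have step z : Mx z -> (Mx (4%:R * z) /\ Mx (6%:R * z)) \/ Mx 1.
  move=> mz; have [Hz Oz _] := mz.
  case O6: (Ok (6%:R * z)); last first.
    right; move/negbT: O6; rewrite negb_and !negbK => /orP[] /eqP h.
      apply: (M1 z mz); apply: (mulfI n3); rewrite mulr1 -[in RHS]h; ring.
    apply: (M1 (- z) (msym _ mz)); apply: (mulfI n3); rewrite mulr1 -[in RHS]h; ring.
  case O4z: (Ok (- 4%:R * z)); last first.
    right; move/negbT: O4z; rewrite negb_and !negbK => /orP[] /eqP h.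
      apply: (M38 (- z) (msym _ mz)); rewrite -[in RHS]h; ring.
    apply: (M38 z mz); rewrite -[in RHS]h; ring.
  left.
  have H4z : Hs (- 4%:R * z) by rewrite mulNr; apply/Hs_neg/Hs_4.
  have [m6 m4] := cm z _ _ mz (Hs_6 Hz) O6 H4z O4z (ltac:(ring)).
  by split => //; have := msym _ m4; rewrite mulNr opprK.
have it4 z n : Mx z -> Mx (z * 4%:R ^+ n) \/ Mx 1.
  elim: n => [|n IH] mz; first by left; rewrite expr0 mulr1.
  case: (IH mz) => [m|]; last by right.
  case: (step _ m) => [[m4 _]|]; last by right.
  by left; rewrite exprS mulrCA.
have it6 z n : Mx z -> Mx (z * 6%:R ^+ n) \/ Mx 1.
  elim: n => [|n IH] mz; first by left; rewrite expr0 mulr1.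
  case: (IH mz) => [m|]; last by right.
  case: (step _ m) => [[_ m6]|]; last by right.
  by left; rewrite exprS mulrCA.
have mone : Mx 1.
  have my0' : Mx (e4 t0) by split => //; exists t0.1.1, t0.1.2, t0.2.
  move: my0'; rewrite /e4; move: (t0.1.1) (nat_of_ord t0.1.2) (nat_of_ord t0.2) => b i j my0.
  case: (it4 _ (i * p.-2)%N my0) => // m4.
  have e1 : el p b i j * 4%:R ^+ (i * p.-2) = (-1) ^+ b * 6%:R ^+ j.
    by rewrite /el mulrAC -[(-1) ^+ b * _ * _]mulrA pw_id // mulr1.
  rewrite e1 in m4.
  case: (it6 _ (j * p.-2)%N m4) => // m6.
  rewrite -mulrA pw_id // mulr1 in m6.
  case: b m6 {e1 m4 my0} => m6.
    by have := msym _ m6; rewrite expr1 opprK.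
  by move: m6; rewrite expr0.
have [_ _ e1] := mone.
have := Mb _ H4 O4; have := fs _ (qr1 p); rewrite e1 => fm1 f4.
lra.
Qed.

Unset Implicit Arguments.

Theorem proposition2p2 (p : nat) :
  prime p -> (5 < p)%N ->
  qr (-1 : 'F_p) -> ~~ qr (2%:R : 'F_p) -> ~~ qr (3%:R : 'F_p) ->
  ~ metrizable (@paley_adj p) (@Pp p).
Proof.
move=> pp p5 q1 n2 n3 [w [ew mc]].
have p29 := p_ge29 pp p5 q1 n2 n3.
have mc' : MetC w := mc.
have q6 : qr (6%:R : 'F_p).
  rewrite (_ : 6 = 2 * 3)%N // natrM; apply: qr_nn => //.
  - exact: (nz 2 pp p29).
  - exact: (nz 3 pp p29).
apply: (@core p (fav w) pp p29 q1 n2 q6).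
- by move=> x qx; apply: fav_sym.
- move=> y z1 z2 y0 qz1 qz2 nq h3 hn3 e.
  by apply: fav_conv => //; exact: (nz 2 pp p29).
- by apply: fav_p3 => //; [exact: (nz 3 pp p29) | exact: (nz 4 pp p29)].
- exact: fav_pos.
Qed.
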